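(* Let $G$ be the graph with vertex set $\{a_i,b_i,c_i : i\in[4]\}\cup\{q_i^j,r_i^j : i\in[4], j\in[2]\}$ and edges: the three four-cycles $A$: $a_ia_{i\bmod 4+1}$, $B$: $b_ib_{i\bmod 4+1}$, $C$: $c_ic_{i\bmod 4+1}$ ($i\in[4]$); $q_i^j a_k, q_i^j b_k, q_i^j c_k$ for all $i,k\in[4]$, $j\in[2]$; $r_i^jq_i^j$; and $r_i^ja_i, r_i^ja_{i\bmod 4+1}, r_i^jb_i, r_i^jb_{i\bmod 4+1}, r_i^jc_i, r_i^jc_{i\bmod 4+1}$ for $i\in[4],j\in[2]$. Call $\{q_i^j,r_i^j\}$ an apex pair. In any planar geometric storyplan of $G$ there exist at least 6 frames, each containing (all vertices of) a different apex pair and all vertices of the four-cycles $A$, $B$, $C$.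
   Context: A storyplan of a graph $G$ on time steps $[\ell]$ is a pair $(A,\mathcal{D})$ where $A$ assigns to each vertex $v$ a nonempty interval $A(v)\subseteq[\ell]$ of consecutive integers ($v$ is visible at each $t\in A(v)$), adjacent vertices have intersecting intervals, and $\mathcal{D}$ assigns one fixed point to each vertex and one fixed curve to each edge. The frame at $t$ is the drawing under $\mathcal{D}$ of $G[\{v : t\in A(v)\}]$; a frame contains a vertex if the vertex is visible at $t$. The storyplan is planar geometric if every frame is a planar drawing with all edges straight-line segments. *)

(* Defs.v *)
From mathcomp Require Import all_boot all_order all_algebra.
From mathcomp Require Import reals.
Set Implicit Arguments. Unset Strict Implicit. Unset Printing Implicit Defensive.
Import Order.TTheory GRing.Theory Num.Theory.
Local Open Scope ring_scope.

(* Vertices of G (indices 0-based: [4] ~ 'I_4, [2] ~ 'I_2). *)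
Inductive V : Type :=
| VA of 'I_4 | VB of 'I_4 | VC of 'I_4
| VQ of 'I_4 & 'I_2
| VR of 'I_4 & 'I_2.

(* successor on the four-cycle: i mod 4 + 1 in 1-based indexing *)
Definition nxt (i : 'I_4) : 'I_4 := inord (i.+1 %% 4).

Definition edge0 (u v : V) : Prop :=
  match u, v with
  | VA i, VA k => k = nxt i
  | VB i, VB k => k = nxt i
  | VC i, VC k => k = nxt i
  | VQ _ _, VA _ => True
  | VQ _ _, VB _ => True
  | VQ _ _, VC _ => True
  | VR i j, VQ i' j' => i = i' /\ j = j'
  | VR i _, VA k => k = i \/ k = nxt i
  | VR i _, VB k => k = i \/ k = nxt i
  | VR i _, VC k => k = i \/ k = nxt i
  | _, _ => False
  end.

Definition adj (u v : V) : Prop := edge0 u v \/ edge0 v u.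

Definition on_seg {R : realType} (p q x : R * R) : Prop :=
  exists t : R, 0 <= t <= 1 /\
    x = (p.1 + t * (q.1 - p.1), p.2 + t * (q.2 - p.2)).

Definition planar_straight_frame {R : realType} (vis : V -> Prop)
    (pos : V -> R * R) : Prop :=
  (forall u v, vis u -> vis v -> u <> v -> pos u <> pos v) /\
  (forall u v w, vis u -> vis v -> vis w -> adj u v -> w <> u -> w <> v ->
     ~ on_seg (pos u) (pos v) (pos w)) /\
  (forall u1 v1 u2 v2 x, vis u1 -> vis v1 -> vis u2 -> vis v2 ->
     adj u1 v1 -> adj u2 v2 ->
     ~ ((u1 = u2 /\ v1 = v2) \/ (u1 = v2 /\ v1 = u2)) ->
     on_seg (pos u1) (pos v1) x -> on_seg (pos u2) (pos v2) x ->
     exists w, (w = u1 \/ w = v1) /\ (w = u2 \/ w = v2) /\ x = pos w).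

(* v visible at time t: A(v) = [s v, e v] *)
Definition visible (s e : V -> nat) (t : nat) (v : V) : Prop :=
  (s v <= t <= e v)%N.

Definition planar_geometric_storyplan {R : realType} (l : nat)
    (s e : V -> nat) (pos : V -> R * R) : Prop :=
  (forall v, (1 <= s v)%N /\ (s v <= e v)%N /\ (e v <= l)%N) /\
  (forall u v, adj u v -> exists t, visible s e t u /\ visible s e t v) /\
  (forall t, (1 <= t <= l)%N -> planar_straight_frame (visible s e t) pos).

(* Main.v *)
Require Import Defs.
From mathcomp Require Import all_boot all_order all_algebra.
From mathcomp Require Import reals.
From mathcomp Require Import ring lra zify.
From Stdlib Require Import Classical.
Set Implicit Arguments. Unset Strict Implicit. Unset Printing Implicit Defensive.
Import Order.TTheory GRing.Theory Num.Theory.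

Module GeoM.
Local Open Scope ring_scope.
Section Geo.
Variable R : realType.
Implicit Types a b c d p q x : R * R.

Definition orient a b c : R := (b.1 - a.1) * (c.2 - a.2) - (b.2 - a.2) * (c.1 - a.1).

Lemma frac01 (a b : R) : a * b <= 0 -> a != b -> 0 <= a / (a - b) <= 1.
Proof.
move=> hab hne.
have hd : a - b != 0 by rewrite subr_eq0.
have hdd : 0 < (a - b) * (a - b) by rewrite -expr2 exprn_even_gt0.
have ht : a / (a - b) * (a - b) = a by rewrite divfK.
set t := a / (a - b) in ht *.
have h2 : (a - b) * (a - b) * (t * t - t) <= 0.
  have -> : (a - b) * (a - b) * (t * t - t) = (t * (a - b)) * (t * (a - b)) - (t * (a - b)) * (a - b) by ring.
  rewrite ht; nra.
have h3 : t * t - t <= 0.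
  by rewrite -(pmulr_rle0 _ hdd).
apply/andP; split; nra.
Qed.

Lemma SX a b c d :
  orient c d a * orient c d b <= 0 -> orient c d a != orient c d b ->
  orient a b c * orient a b d <= 0 -> orient a b c != orient a b d ->
  exists x, on_seg a b x /\ on_seg c d x.
Proof.
move=> h1 h2 h3 h4.
set t := orient c d a / (orient c d a - orient c d b).
set s := orient a b c / (orient a b c - orient a b d).
exists (a.1 + t * (b.1 - a.1), a.2 + t * (b.2 - a.2)); split.
  by exists t; split => //; apply: frac01.
exists s; split; first by apply: frac01.
have n1 : orient c d a - orient c d b != 0 by rewrite subr_eq0.
have n2 : orient a b c - orient a b d != 0 by rewrite subr_eq0.
rewrite /t /s; move: n1 n2; rewrite /orient => n1 n2.
congr pair; field; by apply/andP.
Qed.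

Lemma on_seg_sym p q x : on_seg p q x -> on_seg q p x.
Proof.
case=> t [/andP[t0 t1] ->]; exists (1 - t); split.
  by apply/andP; split; lra.
congr pair; ring.
Qed.

Definition rr (a b : R) := if b <= 0 then a / (a - b) else 1.

Lemma rrP (a b : R) : 0 < a ->
  [/\ 0 < rr a b <= 1, (b <= 0 -> a + rr a b * (b - a) = 0),
      (forall t, 0 <= t <= rr a b -> 0 <= a + t * (b - a)) & (0 < b -> rr a b = 1)].
Proof.
move=> ha; rewrite /rr; case: ifP => hb; last first.
  move/negbT: hb; rewrite -ltNge => hb.
  split; [by rewrite ltr01 lexx| by move=> h; lra | | by []].
  move=> t /andP[t0 t1]; rewrite (_ : a + t * (b - a) = (1 - t) * a + t * b); last ring.
  apply: addr_ge0; apply: mulr_ge0; lra.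
have hd : a - b != 0 by apply/eqP => h; lra.
have hpos : 0 < a - b by lra.
have ht : a / (a - b) * (a - b) = a by rewrite divfK.
set r := a / (a - b) in ht *.
have r0 : 0 < r by rewrite /r divr_gt0.
have r1 : r <= 1 by rewrite /r ler_pdivrMr // mul1r; lra.
split => //; first by rewrite r0 r1.
- move=> _; rewrite (_ : a + r * (b - a) = a - r * (a - b)); last ring.
  by rewrite ht subrr.
- move=> t /andP[t0 tr].
  rewrite (_ : a + t * (b - a) = (r - t) * (a - b)); last first.
    rewrite (_ : (r - t) * (a - b) = r * (a - b) - t * (a - b)); last ring.
    rewrite ht; ring.
  apply: mulr_ge0; lra.
- by move=> h; lra.
Qed.

Lemma min_cases (x y : R) : Num.min x y = x \/ Num.min x y = y.
Proof. by rewrite minEle; case: ifP; [left|right]. Qed.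

Lemma first_zero (a1 b1 a2 b2 a3 b3 : R) : 0 < a1 -> 0 < a2 -> 0 < a3 ->
  (b1 <= 0 \/ b2 <= 0 \/ b3 <= 0) ->
  exists t, [/\ 0 <= t <= 1, 0 <= a1 + t * (b1 - a1), 0 <= a2 + t * (b2 - a2),
    0 <= a3 + t * (b3 - a3) &
    (a1 + t * (b1 - a1) = 0 \/ a2 + t * (b2 - a2) = 0 \/ a3 + t * (b3 - a3) = 0)].
Proof.
move=> h1 h2 h3 hb.
case: (rrP b1 h1) => /andP[p1 q1] z1 g1 o1.
case: (rrP b2 h2) => /andP[p2 q2] z2 g2 o2.
case: (rrP b3 h3) => /andP[p3 q3] z3 g3 o3.
set r1 := rr a1 b1 in p1 q1 z1 g1 o1.
set r2 := rr a2 b2 in p2 q2 z2 g2 o2.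
set r3 := rr a3 b3 in p3 q3 z3 g3 o3.
set t := Num.min r1 (Num.min r2 r3).
have t1 : t <= r1 by rewrite /t ge_min lexx.
have t2 : t <= r2 by rewrite /t !ge_min lexx orbT.
have t3 : t <= r3 by rewrite /t !ge_min lexx !orbT.
have t0 : 0 < t by rewrite /t !lt_min p1 p2 p3.
exists t; split.
- apply/andP; split; lra.
- by apply: g1; apply/andP; split; lra.
- by apply: g2; apply/andP; split; lra.
- by apply: g3; apply/andP; split; lra.
have ht : t = r1 \/ t = r2 \/ t = r3.
  rewrite /t; case: (min_cases r1 (Num.min r2 r3)) => ->; first by left.
  by right; apply: min_cases.
have K : forall b : R, b <= 0 \/ 0 < b by move=> b; case: (lerP b 0); [left|right].
have fin : t = 1 -> (a1 + t * (b1 - a1) = 0 \/ a2 + t * (b2 - a2) = 0 \/ a3 + t * (b3 - a3) = 0).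
  move=> e; case: hb => [hk|[hk|hk]].
  - by left; rewrite (_ : t = r1); [apply: z1 | lra].
  - by right; left; rewrite (_ : t = r2); [apply: z2 | lra].
  - by right; right; rewrite (_ : t = r3); [apply: z3 | lra].
case: ht => [e|[e|e]].
- case: (K b1) => hk; first by left; rewrite e; apply: z1.
  by apply: fin; rewrite e; apply: o1.
- case: (K b2) => hk; first by right; left; rewrite e; apply: z2.
  by apply: fin; rewrite e; apply: o2.
- case: (K b3) => hk; first by right; right; rewrite e; apply: z3.
  by apply: fin; rewrite e; apply: o3.
Qed.

Lemma orient_cyc a b c : orient b c a = orient a b c.
Proof. rewrite /orient; ring. Qed.

Lemma orient_swap a b c : orient a c b = - orient a b c.
Proof. rewrite /orient; ring. Qed.

Lemma orient_sum a b c x : orient a b x + orient b c x + orient c a x = orient a b c.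
Proof. rewrite /orient; ring. Qed.

Lemma bary a b c x : orient a b x = 0 -> 0 <= orient b c x -> 0 <= orient c a x ->
  0 < orient a b c -> on_seg a b x.
Proof.
move=> h0 h1 h2 hD.
have DS := orient_sum a b c x.
have hDn : orient a b c != 0 by rewrite gt_eqF.
exists (orient c a x / orient a b c); split.
  apply/andP; split; first by apply: divr_ge0 => //; lra.
  by rewrite ler_pdivrMr // mul1r; lra.
have E1 : orient a b c * x.1 = orient b c x * a.1 + orient c a x * b.1 + orient a b x * c.1.
  by rewrite /orient; ring.
have E2 : orient a b c * x.2 = orient b c x * a.2 + orient c a x * b.2 + orient a b x * c.2.
  by rewrite /orient; ring.
have hA : orient b c x = orient a b c - orient c a x by lra.
move: E1 E2; rewrite h0 hA !mul0r !addr0 => E1 E2.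
case: x h0 h1 h2 DS hA E1 E2 => x1 x2 /= h0 h1 h2 DS hA E1 E2.
congr pair.
  by rewrite -{1}(mulKf hDn x1) E1; field.
by rewrite -{1}(mulKf hDn x2) E2; field.
Qed.

Lemma orient_aff a b p q t :
  orient a b (p.1 + t * (q.1 - p.1), p.2 + t * (q.2 - p.2)) =
  orient a b p + t * (orient a b q - orient a b p).
Proof. rewrite /orient /=; ring. Qed.

Lemma sep_geo a b c p q :
  0 < orient a b p -> 0 < orient b c p -> 0 < orient c a p ->
  ~ (0 < orient a b q /\ 0 < orient b c q /\ 0 < orient c a q) ->
  exists x, on_seg p q x /\ (on_seg a b x \/ on_seg b c x \/ on_seg c a x).
Proof.
move=> h1 h2 h3 hn.
have hb : orient b c q <= 0 \/ orient c a q <= 0 \/ orient a b q <= 0.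
  case: (lerP (orient b c q) 0) => ?; first by left.
  case: (lerP (orient c a q) 0) => ?; first by right; left.
  case: (lerP (orient a b q) 0) => ?; first by right; right.
  by exfalso; apply: hn.
have [t [/andP[t0 t1] g1 g2 g3 gz]] := first_zero h2 h3 h1 hb.
set x := (p.1 + t * (q.1 - p.1), p.2 + t * (q.2 - p.2)).
have hD : 0 < orient a b c by rewrite -(orient_sum a b c p); lra.
exists x; split; first by exists t; split => //; apply/andP.
rewrite -!(orient_aff _ _ p q t) -/x in g1 g2 g3 gz.
case: gz => [z|[z|z]].
- by right; left; apply: (bary (c:=a)) => //; rewrite (orient_cyc a b c).
- by right; right; apply: (bary (c:=b)) => //; rewrite (orient_cyc b c a) (orient_cyc a b c).
- by left; apply: (bary (c:=c)).
Qed.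

Lemma pt_neq0 a b : a <> b -> 0 < (b.1 - a.1) ^+ 2 + (b.2 - a.2) ^+ 2.
Proof.
case: a b => a1 a2 [b1 b2] /= hne.
have g1 := sqr_ge0 (b1 - a1); have g2 := sqr_ge0 (b2 - a2).
case: (eqVneq (b1 - a1) 0) => h1.
  case: (eqVneq (b2 - a2) 0) => h2.
    by exfalso; apply: hne; congr pair; apply/eqP; rewrite eq_sym -subr_eq0; apply/eqP.
  have : 0 < (b2 - a2) ^+ 2 by rewrite exprn_even_gt0.
  lra.
have : 0 < (b1 - a1) ^+ 2 by rewrite exprn_even_gt0.
lra.
Qed.

Lemma col3 a b c : a <> b -> orient a b c = 0 ->
  on_seg a b c \/ on_seg a c b \/ on_seg b c a.
Proof.
move=> hab h0; have hn := pt_neq0 hab.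
case: a b c hab h0 hn => a1 a2 [b1 b2] [c1 c2] /= hab h0 hn.
set nn := (b1 - a1) ^+ 2 + (b2 - a2) ^+ 2 in hn.
set k := ((c1 - a1) * (b1 - a1) + (c2 - a2) * (b2 - a2)) / nn.
have hnn : nn != 0 by rewrite gt_eqF.
have D : k * nn = (c1 - a1) * (b1 - a1) + (c2 - a2) * (b2 - a2) by rewrite /k divfK.
move: h0; rewrite /orient /= => h0.
have E1 : c1 = a1 + k * (b1 - a1).
  have F : nn * (c1 - (a1 + k * (b1 - a1))) = (c1 - a1) * nn - (k * nn) * (b1 - a1) by ring.
  rewrite D in F.
  have G : (c1 - a1) * nn - ((c1 - a1) * (b1 - a1) + (c2 - a2) * (b2 - a2)) * (b1 - a1) =
     - (b2 - a2) * ((b1 - a1) * (c2 - a2) - (b2 - a2) * (c1 - a1)) by rewrite /nn; ring.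
  rewrite G h0 mulr0 in F.
  by move/eqP: F; rewrite mulf_eq0 (negbTE hnn) /= subr_eq0 => /eqP.
have E2 : c2 = a2 + k * (b2 - a2).
  have F : nn * (c2 - (a2 + k * (b2 - a2))) = (c2 - a2) * nn - (k * nn) * (b2 - a2) by ring.
  rewrite D in F.
  have G : (c2 - a2) * nn - ((c1 - a1) * (b1 - a1) + (c2 - a2) * (b2 - a2)) * (b2 - a2) =
     (b1 - a1) * ((b1 - a1) * (c2 - a2) - (b2 - a2) * (c1 - a1)) by rewrite /nn; ring.
  rewrite G h0 mulr0 in F.
  by move/eqP: F; rewrite mulf_eq0 (negbTE hnn) /= subr_eq0 => /eqP.
case: (lerP 0 k) => k0.
  case: (lerP k 1) => k1.
    by left; exists k; split; [apply/andP | rewrite E1 E2].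
  right; left; exists k^-1; split.
    have kp : 0 < k by lra.
    rewrite invr_ge0 k0 /=.
    by rewrite invf_le1 //; lra.
  have hk : k != 0 by rewrite gt_eqF //; lra.
  by rewrite /= E1 E2; congr pair; field.
right; right; exists (1 - k)^-1; split.
  have kp : 0 < 1 - k by lra.
  rewrite invr_ge0 ltW //=.
  by rewrite invf_le1 //; lra.
have hk : 1 - k != 0 by rewrite gt_eqF //; lra.
by rewrite /= E1 E2; congr pair; field.
Qed.

Lemma orient_swap12 a b c : orient b a c = - orient a b c.
Proof. rewrite /orient; ring. Qed.

Lemma orient_deg a b : orient a b b = 0.
Proof. rewrite /orient; ring. Qed.

Lemma on_seg_orient a b p q m : on_seg p q m ->
  exists t, 0 <= t <= 1 /\ orient a b m = orient a b p + t * (orient a b q - orient a b p).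
Proof. by case=> t [ht ->]; exists t; split => //; rewrite orient_aff. Qed.

Definition inT p a b c :=
  (0 < orient a b p /\ 0 < orient b c p /\ 0 < orient c a p) \/
  (orient a b p < 0 /\ orient b c p < 0 /\ orient c a p < 0).

Lemma adj_sym u v : adj u v -> adj v u.
Proof. by rewrite /adj; case; [right|left]. Qed.



End Geo.

Section Frame.
Variable R : realType.
Variables (vis : V -> Prop) (pos : V -> R * R).
Hypothesis Hpl : planar_straight_frame vis pos.

Lemma noOn u v w : vis u -> vis v -> vis w -> adj u v -> w <> u -> w <> v ->
  ~ on_seg (pos u) (pos v) (pos w).
Proof. by case: Hpl => _ [H _]; apply: H. Qed.

Lemma noX u1 v1 u2 v2 x : vis u1 -> vis v1 -> vis u2 -> vis v2 ->
  adj u1 v1 -> adj u2 v2 -> u1 <> u2 -> u1 <> v2 -> v1 <> u2 -> v1 <> v2 ->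
  on_seg (pos u1) (pos v1) x -> on_seg (pos u2) (pos v2) x -> False.
Proof.
case: Hpl => _ [_ H] h1 h2 h3 h4 a1 a2 n1 n2 n3 n4 s1 s2.
have [w [hw1 [hw2 _]]] := H u1 v1 u2 v2 x h1 h2 h3 h4 a1 a2
  (fun h => match h with or_introl (conj e _) => n1 e | or_intror (conj e _) => n2 e end) s1 s2.
by case: hw1 hw2 => -> [e|e]; [exact: n1 e | exact: n2 e | exact: n3 e | exact: n4 e].
Qed.

Local Notation o u v w := (orient (pos u) (pos v) (pos w)).

Lemma offline u v x : vis u -> vis v -> vis x -> adj u v -> adj x u -> adj x v ->
  u <> v -> x <> u -> x <> v -> o u v x != 0.
Proof.
move=> hu hv hx auv axu axv nuv nxu nxv; apply/eqP => h0.
have hp : pos u <> pos v by case: Hpl => [H _]; apply: H.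
case: (col3 hp h0) => [h|[h|h]].
- exact: (noOn hu hv hx auv nxu nxv h).
- exact: (noOn hu hx hv (adj_sym axu) (fun e => nuv (esym e)) (fun e => nxv (esym e)) h).
- exact: (noOn hv hx hu (adj_sym axv) nuv (fun e => nxu (esym e)) h).
Qed.

Lemma inT_neg (p a b c : R * R) : inT p a b c <-> inT p a c b.
Proof.
rewrite /inT.
have e1 := orient_swap12 a c p; have e2 := orient_swap12 c b p; have e3 := orient_swap12 b a p.
split; case=> [[h1 [h2 h3]]|[h1 [h2 h3]]].
- by right; split; [|split]; lra.
- by left; split; [|split]; lra.
- by right; split; [|split]; lra.
- by left; split; [|split]; lra.
Qed.

Lemma sepL a b c p q : vis a -> vis b -> vis c -> vis p -> vis q ->
  adj a b -> adj b c -> adj c a -> adj p q ->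
  p <> a -> p <> b -> p <> c -> q <> a -> q <> b -> q <> c ->
  inT (pos p) (pos a) (pos b) (pos c) -> ~ inT (pos q) (pos a) (pos b) (pos c) -> False.
Proof.
move=> va vb vc vp vq ab bc ca pq pa pb pc qa qb qc hin hout.
have key : forall a b c, vis a -> vis b -> vis c -> adj a b -> adj b c -> adj c a ->
   p <> a -> p <> b -> p <> c -> q <> a -> q <> b -> q <> c ->
   0 < o a b p -> 0 < o b c p -> 0 < o c a p ->
   ~ (0 < o a b q /\ 0 < o b c q /\ 0 < o c a q) -> False.
  move=> a' b' c' va' vb' vc' ab' bc' ca' pa' pb' pc' qa' qb' qc' h1 h2 h3 h4.
  have [x [sx [s1|[s1|s1]]]] := sep_geo h1 h2 h3 h4.
  - by apply: (noX vp vq va' vb' pq ab') sx s1.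
  - by apply: (noX vp vq vb' vc' pq bc') sx s1.
  - by apply: (noX vp vq vc' va' pq ca') sx s1.
case: hin => [[h1 [h2 h3]]|[h1 [h2 h3]]].
  by apply: (key a b c) => // -[k1 [k2 k3]]; apply: hout; left.
have e1 := orient_swap12 (pos a) (pos c) (pos p); have e2 := orient_swap12 (pos c) (pos b) (pos p).
have e3 := orient_swap12 (pos b) (pos a) (pos p).
have f1 := orient_swap12 (pos a) (pos c) (pos q); have f2 := orient_swap12 (pos c) (pos b) (pos q).
have f3 := orient_swap12 (pos b) (pos a) (pos q).
apply: (key a c b) => //; try by apply: adj_sym.
- lra.
- lra.
- lra.
- move=> [k1 [k2 k3]]; apply: hout; right; split; [|split]; lra.
Qed.
End Frame.


Section F2.
Variable R : realType.

Lemma prod_trans (a b c : R) : 0 < a * b -> 0 < a * c -> 0 < b * c.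
Proof.
case: (ltgtP a 0) => ha.
- move=> hb hc; rewrite nmulr_rgt0 // in hb; rewrite nmulr_rgt0 // in hc.
  by rewrite nmulr_rgt0.
- move=> hb hc; rewrite pmulr_rgt0 // in hb; rewrite pmulr_rgt0 // in hc.
  by rewrite pmulr_rgt0.
- by rewrite ha mul0r ltxx.
Qed.

Lemma three_signs (a b c : R) : a != 0 -> b != 0 -> c != 0 ->
  0 < a * b \/ 0 < a * c \/ 0 < b * c.
Proof.
move=> ha hb hc.
case: (ltgtP a 0) => ha'; last by rewrite ha' eqxx in ha.
- case: (ltgtP b 0) => hb'; last by rewrite hb' eqxx in hb.
  + by left; rewrite nmulr_rgt0.
  + case: (ltgtP c 0) => hc'; last by rewrite hc' eqxx in hc.
    * by right; left; rewrite nmulr_rgt0.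
    * by right; right; rewrite pmulr_rgt0.
- case: (ltgtP b 0) => hb'; last by rewrite hb' eqxx in hb.
  + case: (ltgtP c 0) => hc'; last by rewrite hc' eqxx in hc.
    * by right; right; rewrite nmulr_rgt0.
    * by right; left; rewrite pmulr_rgt0.
  + by left; rewrite pmulr_rgt0.
Qed.

Lemma conv_pos (A B t : R) : 0 < A -> 0 < B -> 0 <= t <= 1 -> 0 < A + t * (B - A).
Proof.
move=> hA hB /andP[t0 t1].
rewrite (_ : A + t * (B - A) = (1 - t) * A + t * B); last ring.
case: (ltP t 1) => ht.
  have : 0 < (1 - t) * A by apply: mulr_gt0; lra.
  have : 0 <= t * B by apply: mulr_ge0; lra.
  lra.
have -> : t = 1 by lra.
lra.
Qed.

Lemma pn1 (a b : R) : 0 < a -> b < 0 -> a * b <= 0.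
Proof. by move=> ha hb; rewrite pmulr_rle0 // ltW. Qed.
Lemma pn2 (a b : R) : 0 < a -> b < 0 -> a != b.
Proof. by move=> ha hb; rewrite gt_eqF // (lt_trans hb ha). Qed.
Lemma np1 (a b : R) : a < 0 -> 0 < b -> a * b <= 0.
Proof. by move=> ha hb; rewrite mulrC pn1. Qed.
Lemma np2 (a b : R) : a < 0 -> 0 < b -> a != b.
Proof. by move=> ha hb; rewrite lt_eqF // (lt_trans ha hb). Qed.

Variables (vis : V -> Prop) (pos : V -> R * R).
Hypothesis Hpl : planar_straight_frame vis pos.

Local Notation o u v w := (orient (pos u) (pos v) (pos w)).
Local Notation inTl p a b c := (inT (pos p) (pos a) (pos b) (pos c)).

Lemma sameside x u v y : inTl y x u v -> 0 < o u v x * o u v y.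
Proof.
have S := orient_sum (pos x) (pos u) (pos v) (pos y).
have C := orient_cyc (pos x) (pos u) (pos v).
case=> [[h1 [h2 h3]]|[h1 [h2 h3]]].
  by apply: mulr_gt0; lra.
by rewrite nmulr_rgt0; lra.
Qed.

Lemma mutual x y u v : inTl y x u v -> inTl x y u v -> False.
Proof.
have S1 := orient_sum (pos x) (pos u) (pos v) (pos y).
have C1 := orient_cyc (pos x) (pos u) (pos v).
have S2 := orient_sum (pos y) (pos u) (pos v) (pos x).
have C2 := orient_cyc (pos y) (pos u) (pos v).
have W := orient_swap (pos v) (pos x) (pos y).
by case=> [[h1 [h2 h3]]|[h1 [h2 h3]]] [[k1 [k2 k3]]|[k1 [k2 k3]]]; lra.
Qed.

Ltac side := first [assumption | (apply: adj_sym; assumption) | congruence].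

Lemma posd u v : vis u -> vis v -> u <> v -> pos u <> pos v.
Proof. by case: Hpl => H _; apply: H. Qed.

Lemma seg_between x y u v m : 0 < o u v x -> 0 < o u v y -> orient (pos u) (pos v) m = 0 ->
  on_seg (pos x) (pos y) m -> False.
Proof.
move=> px py h0 hs.
have [t [ht e]] := on_seg_orient (pos u) (pos v) hs.
have := conv_pos px py ht; lra.
Qed.

Lemma nest_pos x y u v : vis x -> vis y -> vis u -> vis v ->
  adj u v -> adj x u -> adj x v -> adj y u -> adj y v ->
  x <> y -> x <> u -> x <> v -> y <> u -> y <> v -> u <> v ->
  0 < o u v x -> 0 < o u v y -> inTl y x u v \/ inTl x y u v.
Proof.
move=> vx vy vu vv auv axu axv ayu ayv nxy nxu nxv nyu nyv nuv px py.
have i1 : o y u x = - o x u y by rewrite /orient; ring.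
have i2 : o v y x = - o v x y by rewrite /orient; ring.
have dA : o v x y <> 0.
  move=> h0; case: (col3 (posd vv vx (fun e => nxv (esym e))) h0) => [h|[h|h]].
  - exact: (noOn Hpl vv vx vy (adj_sym axv) nyv (fun e => nxy (esym e)) h).
  - exact: (noOn Hpl vv vy vx (adj_sym ayv) nxv nxy h).
  - by apply: (seg_between px py _ h); rewrite /orient; ring.
have dB : o x u y <> 0.
  move=> h0; case: (col3 (posd vx vu nxu) h0) => [h|[h|h]].
  - exact: (noOn Hpl vx vu vy axu (fun e => nxy (esym e)) nyu h).
  - by apply: (seg_between px py _ h); rewrite /orient; ring.
  - exact: (noOn Hpl vu vy vx (adj_sym ayu) nxu nxy h).
case: (ltgtP (o v x y) 0) => ha; case: (ltgtP (o x u y) 0) => hb; try by [case: dA | case: dB].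
- by right; left; split; [|split]; lra.
- exfalso.
  have j1 : orient (pos v) (pos x) (pos u) = o u v x by rewrite /orient; ring.
  have j2 : orient (pos u) (pos y) (pos v) = - o u v y by rewrite /orient; ring.
  have j3 : orient (pos u) (pos y) (pos x) = o x u y by rewrite /orient; ring.
  have [z [s1 s2]] : exists z, on_seg (pos u) (pos y) z /\ on_seg (pos v) (pos x) z.
    apply: SX; rewrite ?j1 ?j2 ?j3.
    - apply: pn1; lra.
    - apply: pn2; lra.
    - apply: np1; lra.
    - apply: np2; lra.
  by apply: (noX Hpl vu vy vv vx (adj_sym ayu) (adj_sym axv)) s1 s2; congruence.
- exfalso.
  have j1 : orient (pos v) (pos y) (pos u) = o u v y by rewrite /orient; ring.
  have j2 : orient (pos u) (pos x) (pos v) = - o u v x by rewrite /orient; ring.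
  have j3 : orient (pos u) (pos x) (pos y) = - o x u y by rewrite /orient; ring.
  have j4 : orient (pos v) (pos y) (pos x) = - o v x y by rewrite /orient; ring.
  have [z [s1 s2]] : exists z, on_seg (pos u) (pos x) z /\ on_seg (pos v) (pos y) z.
    apply: SX; rewrite ?j1 ?j2 ?j3 ?j4.
    - apply: pn1; lra.
    - apply: pn2; lra.
    - apply: np1; lra.
    - apply: np2; lra.
  by apply: (noX Hpl vu vx vv vy (adj_sym axu) (adj_sym ayv)) s1 s2; congruence.
- by left; left; split; [|split]; lra.
Qed.

Lemma nestL x y u v : vis x -> vis y -> vis u -> vis v ->
  adj u v -> adj x u -> adj x v -> adj y u -> adj y v ->
  x <> y -> x <> u -> x <> v -> y <> u -> y <> v -> u <> v ->
  0 < o u v x * o u v y -> inTl y x u v \/ inTl x y u v.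
Proof.
move=> vx vy vu vv auv axu axv ayu ayv nxy nxu nxv nyu nyv nuv hp.
case: (ltgtP (o u v x) 0) => hx.
- have hy : o u v y < 0 by rewrite nmulr_rgt0 in hp.
  have e1 : o v u x = - o u v x by rewrite /orient; ring.
  have e2 : o v u y = - o u v y by rewrite /orient; ring.
  have := @nest_pos x y v u vx vy vv vu (adj_sym auv) axv axu ayv ayu nxy nxv nxu nyv nyu
    (fun e => nuv (esym e)).
  rewrite e1 e2 !oppr_gt0 => /(_ hx hy).
  by rewrite (inT_neg (pos y) (pos x) (pos v) (pos u)) (inT_neg (pos x) (pos y) (pos v) (pos u)).
- have hy : 0 < o u v y by rewrite pmulr_rgt0 in hp.
  exact: nest_pos.
- by move: hp; rewrite hx mul0r ltxx.
Qed.

Lemma kill t u v p q w : vis t -> vis u -> vis v -> vis p -> vis q -> vis w ->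
  adj t u -> adj u v -> adj v t -> adj p w -> adj q w ->
  p <> t -> p <> u -> p <> v -> q <> t -> q <> u -> q <> v ->
  w <> t -> w <> u -> w <> v -> p <> w -> q <> w ->
  inTl p t u v -> ~ inTl q t u v -> False.
Proof.
move=> vt vu vv vp vq vw atu auv avt apw aqw ? ? ? ? ? ? ? ? ? ? ? hp hq.
case: (classic (inTl w t u v)) => hw.
- by apply: (sepL Hpl vt vu vv vw vq atu auv avt (adj_sym aqw)) hw hq; congruence.
- by apply: (sepL Hpl vt vu vv vp vw atu auv avt apw) hp hw; congruence.
Qed.

Lemma main3 x y z u v w : vis x -> vis y -> vis z -> vis u -> vis v -> vis w ->
  adj u v -> adj x u -> adj x v -> adj x w -> adj y u -> adj y v -> adj y w ->
  adj z u -> adj z v -> adj z w ->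
  x <> y -> x <> z -> x <> u -> x <> v -> x <> w -> y <> z -> y <> u -> y <> v -> y <> w ->
  z <> u -> z <> v -> z <> w -> u <> v -> u <> w -> v <> w ->
  inTl y x u v -> False.
Proof.
move=> vx vy vz vu vv vw auv axu axv axw ayu ayv ayw azu azv azw
  nxy nxz nxu nxv nxw nyz nyu nyv nyw nzu nzv nzw nuv nuw nvw hy.
case: (classic (inTl z x u v)) => hz.
- have s1 := sameside hy; have s2 := sameside hz.
  have s3 := prod_trans s1 s2.
  case: (@nestL y z u v vy vz vu vv auv ayu ayv azu azv nyz nyu nyv nzu nzv nuv s3) => h.
  + have nx : ~ inTl x y u v by move=> hx; apply: (mutual hy hx).
    apply: (@kill y u v z x w); try side.
  + have nx : ~ inTl x z u v by move=> hx; apply: (mutual hz hx).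
    apply: (@kill z u v y x w); try side.
- apply: (@kill x u v y z w); try side.
Qed.

Lemma main2 x y z u v w : vis x -> vis y -> vis z -> vis u -> vis v -> vis w ->
  adj u v -> adj x u -> adj x v -> adj x w -> adj y u -> adj y v -> adj y w ->
  adj z u -> adj z v -> adj z w ->
  x <> y -> x <> z -> x <> u -> x <> v -> x <> w -> y <> z -> y <> u -> y <> v -> y <> w ->
  z <> u -> z <> v -> z <> w -> u <> v -> u <> w -> v <> w ->
  0 < o u v x * o u v y -> False.
Proof.
move=> vx vy vz vu vv vw auv axu axv axw ayu ayv ayw azu azv azw
  nxy nxz nxu nxv nxw nyz nyu nyv nyw nzu nzv nzw nuv nuw nvw hp.
case: (@nestL x y u v vx vy vu vv auv axu axv ayu ayv nxy nxu nxv nyu nyv nuv hp) => h.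
- by apply: (@main3 x y z u v w); try side.
- by apply: (@main3 y x z u v w); try side.
Qed.

Lemma k33e x y z u v w : vis x -> vis y -> vis z -> vis u -> vis v -> vis w ->
  adj u v -> adj x u -> adj x v -> adj x w -> adj y u -> adj y v -> adj y w ->
  adj z u -> adj z v -> adj z w ->
  x <> y -> x <> z -> x <> u -> x <> v -> x <> w -> y <> z -> y <> u -> y <> v -> y <> w ->
  z <> u -> z <> v -> z <> w -> u <> v -> u <> w -> v <> w -> False.
Proof.
move=> vx vy vz vu vv vw auv axu axv axw ayu ayv ayw azu azv azw
  nxy nxz nxu nxv nxw nyz nyu nyv nyw nzu nzv nzw nuv nuw nvw.
have ox := offline Hpl vu vv vx auv axu axv nuv nxu nxv.
have oy := offline Hpl vu vv vy auv ayu ayv nuv nyu nyv.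
have oz := offline Hpl vu vv vz auv azu azv nuv nzu nzv.
case: (three_signs ox oy oz) => [h|[h|h]].
- by apply: (@main2 x y z u v w); try side.
- by apply: (@main2 x z y u v w); try side.
- by apply: (@main2 y z x u v w); try side.
Qed.

End F2.

End GeoM.
Import GeoM.

Definition prv (i : 'I_4) : 'I_4 := inord ((i + 3) %% 4).
Lemma nxt_prv i : nxt (prv i) = i.
Proof. apply/val_inj; rewrite /nxt /prv /= !inordK ?ltn_mod //; case: i => [[|[|[|[|n]]]] Hi] //. Qed.
Lemma nxt_neq i : nxt i <> i.
Proof. move/(congr1 val); rewrite /nxt /= inordK ?ltn_mod //; case: i => [[|[|[|[|n]]]] Hi] //. Qed.
Lemma prv_neq i : prv i <> i.
Proof. move/(congr1 val); rewrite /prv /= inordK ?ltn_mod //; case: i => [[|[|[|[|n]]]] Hi] //. Qed.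
Lemma nxt_prv_neq i : nxt i <> prv i.
Proof. move/(congr1 val); rewrite /prv /nxt /= !inordK ?ltn_mod //; case: i => [[|[|[|[|n]]]] Hi] //. Qed.
Lemma argmin (T : finType) (t0 : T) (F : T -> nat) : exists i, forall j, F i <= F j.
Proof. have [i _ H] := @arg_minnP _ t0 xpredT F isT. by exists i => j; apply: H. Qed.
Lemma argmax (T : finType) (t0 : T) (F : T -> nat) : exists i, forall j, F j <= F i.
Proof. have [i _ H] := @arg_maxnP _ t0 xpredT F isT. by exists i => j; apply: H. Qed.

Definition cv (c : 'I_3 * 'I_4) : V :=
  match val c.1 with 0 => VA c.2 | 1 => VB c.2 | _ => VC c.2 end.

Lemma VQ_pair (p p' : 'I_4 * 'I_2) : VQ p.1 p.2 = VQ p'.1 p'.2 -> p = p'.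
Proof. by case: p p' => [a b] [c d] /= [-> ->]. Qed.

Definition qv (p : 'I_4 * 'I_2) := VQ p.1 p.2.
Definition rv (p : 'I_4 * 'I_2) := VR p.1 p.2.

Section Main.
Variable R : realType.
Variables (l : nat) (s e : V -> nat) (pos : V -> R * R).
Hypothesis H : planar_geometric_storyplan l s e pos.

Local Notation vis t := (visible s e t).

Lemma visI t v : s v <= t -> t <= e v -> vis t v.
Proof. by move=> a b; rewrite /visible a b. Qed.
Lemma visD t v : vis t v -> s v <= t /\ t <= e v.
Proof. by case/andP. Qed.

Lemma vis_range t v : vis t v -> 1 <= t <= l.
Proof.
case: H => Hr _ /visD [a b]; have [c [d f]] := Hr v.
apply/andP; split; lia.
Qed.

Lemma adjI u v : adj u v -> s u <= e v /\ s v <= e u.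
Proof.
case: H => _ [Hadj _] /Hadj [t [/visD [a b] /visD [c d]]]; split; lia.
Qed.

Lemma k33t t x y z u v w : vis t x -> vis t y -> vis t z -> vis t u -> vis t v -> vis t w ->
  adj u v -> adj x u -> adj x v -> adj x w -> adj y u -> adj y v -> adj y w ->
  adj z u -> adj z v -> adj z w ->
  x <> y -> x <> z -> x <> u -> x <> v -> x <> w -> y <> z -> y <> u -> y <> v -> y <> w ->
  z <> u -> z <> v -> z <> w -> u <> v -> u <> w -> v <> w -> False.
Proof.
move=> vx; have Ht := vis_range vx; case: H => _ [_ Hpl].
exact: (@k33e R (vis t) pos (Hpl t Ht) x y z u v w vx).
Qed.

Lemma adjQ (p : 'I_4 * 'I_2) c : adj (VQ p.1 p.2) (cv c).
Proof. by left; rewrite /cv; case: (val c.1) => [|[|?]]. Qed.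

Ltac side := first [assumption | (by rewrite /qv => /VQ_pair /(congr1 (fun p => val p.1))) | (rewrite /qv /rv; congruence) | (apply: adj_sym; assumption) | congruence | (by left) | (by right)].

Lemma main_result : exists (ts : 'I_6 -> nat) (ps : 'I_6 -> 'I_4 * 'I_2),
    injective ts /\ injective ps /\
    forall k : 'I_6,
      (1 <= ts k <= l)%N /\
      visible s e (ts k) (VQ (ps k).1 (ps k).2) /\
      visible s e (ts k) (VR (ps k).1 (ps k).2) /\
      (forall i : 'I_4, visible s e (ts k) (VA i) /\
         visible s e (ts k) (VB i) /\ visible s e (ts k) (VC i)).
Proof.
have Hr : forall v, 1 <= s v /\ s v <= e v /\ e v <= l by case: H.
pose c0 : 'I_3 * 'I_4 := (ord0, ord0).
have [cL HL] := argmax c0 (fun c => s (cv c)).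
have [cM HM] := argmin c0 (fun c => e (cv c)).
set L := s (cv cL) in HL; set M := e (cv cM) in HM.
have Hq : forall p, s (qv p) <= M /\ L <= e (qv p).
  move=> p; split; first exact: (adjI (adjQ p cM)).1.
  exact: (adjI (adjQ p cL)).2.
have HA : forall i, s (VA i) <= L /\ M <= e (VA i).
  by move=> i; split; [apply: (HL (@Ordinal 3 0 isT, i)) | apply: (HM (@Ordinal 3 0 isT, i))].
have HB : forall i, s (VB i) <= L /\ M <= e (VB i).
  by move=> i; split; [apply: (HL (@Ordinal 3 1 isT, i)) | apply: (HM (@Ordinal 3 1 isT, i))].
have HC : forall i, s (VC i) <= L /\ M <= e (VC i).
  by move=> i; split; [apply: (HL (@Ordinal 3 2 isT, i)) | apply: (HM (@Ordinal 3 2 isT, i))].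
have HLM : L <= M.
  rewrite leqNgt; apply/negP => hML.
  have [i0 Hi0] := argmin ord0 (fun i : 'I_4 => minn (e (VA i)) L).
  have vA : forall n, s (VA n) <= e (VA i0) -> vis (minn (e (VA i0)) L) (VA n).
    move=> n hn; apply: visI; first by have := (HA n).1; lia.
    by have := Hi0 n; lia.
  have vQ : forall p, vis (minn (e (VA i0)) L) (qv p).
    move=> p; apply: visI; have := Hq p; have := (HA i0).2; lia.
  have a1 : adj (VA i0) (VA (nxt i0)) by left.
  have a2 : adj (VA (prv i0)) (VA i0) by left; rewrite /= nxt_prv.
  have n1 := @nxt_neq i0; have n2 := @prv_neq i0; have n3 := @nxt_prv_neq i0.
  apply: (@k33t (minn (e (VA i0)) L) (qv (@Ordinal 4 0 isT, ord0)) (qv (@Ordinal 4 1 isT, ord0))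
    (qv (@Ordinal 4 2 isT, ord0)) (VA i0) (VA (nxt i0)) (VA (prv i0))); try side; try exact: vQ.
  - exact: vA (Hr _).2.1.
  - exact: vA (adjI a1).2.
  - exact: vA (adjI a2).1.
have Hqr : forall p, s (qv p) <= e (rv p) /\ s (rv p) <= e (qv p).
  by move=> p; apply: adjI; right.
have HrA : forall p, adj (rv p) (VA p.1) by move=> p; left; left.
have HrA' : forall p, adj (rv p) (VA (nxt p.1)) by move=> p; left; right.
have HrB : forall p, adj (rv p) (VB p.1) by move=> p; left; left.
have Hqd : forall p p', p <> p' -> qv p <> qv p' by move=> p p' hp /VQ_pair.
pose good p := maxn L (maxn (s (qv p)) (s (rv p))) <= minn M (minn (e (qv p)) (e (rv p))).
pose early p := e (rv p) < L.
pose late p := M < s (rv p).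
have Hbad : forall p, ~~ good p -> early p \/ late p.
  move=> p; rewrite /good /early /late -ltnNge => hg.
  have [z1 z2] := Hq p; have [z3 z4] := Hqr p; have [z5 [z6 z7]] := Hr (rv p); have [y5 [y6 y7]] := Hr (qv p).
  case: (ltnP (e (rv p)) L) => h1; first by left.
  case: (ltnP M (s (rv p))) => h2; first by right.
  exfalso; move: hg; rewrite ltnNge; move/negP; apply.
  lia.
have Hearly : forall p p', p <> p' -> early p -> early p' -> e (rv p) <= e (rv p') -> False.
  move=> p p' hne h1 h2 hle; rewrite /early in h1 h2.
  have vN : forall n, adj (rv p') n -> M <= e n -> vis (e (rv p')) n.
    by move=> n an hn; apply: visI; [apply: (adjI an).2 | lia].
  apply: (@k33t (e (rv p')) (qv p) (qv p') (rv p') (VA p'.1) (VA (nxt p'.1)) (VB p'.1)); try side.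
  - apply: visI; have := Hq p; have := Hqr p; lia.
  - apply: visI; have := Hq p'; have := Hqr p'; lia.
  - by apply: visI; have := Hr (rv p'); lia.
  - exact: vN (HrA _) (HA _).2.
  - exact: vN (HrA' _) (HA _).2.
  - exact: vN (HrB _) (HB _).2.
  - exact: HrA.
  - exact: HrA'.
  - exact: HrB.
  - exact: Hqd.
  - by case=> /esym; apply: nxt_neq.
have Hlate : forall p p', p <> p' -> late p -> late p' -> s (rv p') <= s (rv p) -> False.
  move=> p p' hne h1 h2 hle; rewrite /late in h1 h2.
  have vN : forall n, adj (rv p') n -> s n <= L -> vis (s (rv p')) n.
    by move=> n an hn; apply: visI; [lia | apply: (adjI an).1].
  apply: (@k33t (s (rv p')) (qv p) (qv p') (rv p') (VA p'.1) (VA (nxt p'.1)) (VB p'.1)); try side.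
  - apply: visI; have := Hq p; have := Hqr p; lia.
  - apply: visI; have := Hq p'; have := Hqr p'; lia.
  - by apply: visI; have := Hr (rv p'); lia.
  - exact: vN (HrA _) (HA _).1.
  - exact: vN (HrA' _) (HA _).1.
  - exact: vN (HrB _) (HB _).1.
  - exact: HrA.
  - exact: HrA'.
  - exact: HrB.
  - exact: Hqd.
  - by case=> /esym; apply: nxt_neq.
have Eu : forall p p', early p -> early p' -> p = p'.
  move=> p p' h1 h2; case: (eqVneq p p') => // /eqP hne; exfalso.
  case: (leqP (e (rv p)) (e (rv p'))) => h.
    by apply: (Hearly p p').
  by apply: (Hearly p' p) => //; [move=> e'; apply: hne | apply: ltnW].
have Lu : forall p p', late p -> late p' -> p = p'.
  move=> p p' h1 h2; case: (eqVneq p p') => // /eqP hne; exfalso.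
  case: (leqP (s (rv p')) (s (rv p))) => h.
    by apply: (Hlate p p').
  by apply: (Hlate p' p) => //; [move=> e'; apply: hne | apply: ltnW].
have c1 : #|[set p | early p]| <= 1.
  apply/card_le1_eqP => x y; rewrite !inE => hx hy.
  exact: Eu hy hx.
have c2 : #|[set p | late p]| <= 1.
  apply/card_le1_eqP => x y; rewrite !inE => hx hy.
  exact: Lu hy hx.
have hsub : ~: [set p | good p] \subset [set p | early p] :|: [set p | late p].
  apply/subsetP => p; rewrite !inE => /Hbad [h|h]; by rewrite h ?orbT.
have c3 : 6 <= #|[set p | good p]|.
  have := cardsC [set p | good p]; rewrite card_prod !card_ord /=.
  have := subset_leq_card hsub; have := cardsU [set p | early p] [set p | late p].
  move: c1 c2; set a := #|[set p | early p]|; set b := #|[set p | late p]|; set c := #|[set p | good p]|; set d := #|~: [set p | good p]|; set f := #|[set p | early p] :|: [set p | late p]|; set g := #|_ :&: _|; lia.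
pose es := enum [set p | good p].
have hsz : 6 <= size es by rewrite /es -cardE.
pose p0 : 'I_4 * 'I_2 := (ord0, ord0).
pose ps (k : 'I_6) := nth p0 es k.
pose tm p := maxn L (maxn (s (qv p)) (s (rv p))).
have Hg : forall k, good (ps k).
  move=> k; have : ps k \in es by apply: mem_nth; apply: leq_trans (ltn_ord k) hsz.
  by rewrite mem_enum inE.
have Hgv : forall p, good p -> vis (tm p) (qv p) /\ vis (tm p) (rv p) /\ L <= tm p /\ tm p <= M.
  move=> p; rewrite /good /tm => hg.
  by split; [|split; [|split]]; try apply: visI; lia.
have injps : injective ps.
  move=> k1 k2 h; apply/val_inj/eqP.
  have k1s : k1 < size es by apply: leq_trans (ltn_ord k1) hsz.
  have k2s : k2 < size es by apply: leq_trans (ltn_ord k2) hsz.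
  by rewrite -(nth_uniq p0 k1s k2s (enum_uniq _)) -/(ps k1) -/(ps k2) h.
exists (fun k => tm (ps k)), ps.
split.
  move=> k1 k2 /= ht; apply: injps; case: (eqVneq (ps k1) (ps k2)) => // /eqP hne; exfalso.
  have [v1 [v2 [v3 v4]]] := Hgv _ (Hg k1).
  have [w1 [w2 [w3 w4]]] := Hgv _ (Hg k2).
  rewrite -ht in w1 w2.
  apply: (@k33t (tm (ps k1)) (qv (ps k1)) (qv (ps k2)) (rv (ps k1)) (VA (ps k1).1)
    (VA (nxt (ps k1).1)) (VB (ps k1).1)); try side.
  - by apply: visI; have := HA (ps k1).1; lia.
  - by apply: visI; have := HA (nxt (ps k1).1); lia.
  - by apply: visI; have := HB (ps k1).1; lia.
  - exact: HrA.
  - exact: HrA'.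
  - exact: HrB.
  - exact: Hqd.
  - by case=> /esym; apply: nxt_neq.
split; first exact: injps.
move=> k; have [v1 [v2 [v3 v4]]] := Hgv _ (Hg k).
split; first exact: vis_range v1.
split; first exact: v1.
split; first exact: v2.
move=> i; split; [|split]; apply: visI.
- by have := HA i; lia.
- by have := HA i; lia.
- by have := HB i; lia.
- by have := HB i; lia.
- by have := HC i; lia.
- by have := HC i; lia.
Qed.

End Main.


Theorem corollary4 (R : realType) (l : nat) (s e : V -> nat) (pos : V -> R * R) :
  planar_geometric_storyplan l s e pos ->
  exists (ts : 'I_6 -> nat) (ps : 'I_6 -> 'I_4 * 'I_2),
    injective ts /\ injective ps /\
    forall k : 'I_6,
      (1 <= ts k <= l)%N /\
      visible s e (ts k) (VQ (ps k).1 (ps k).2) /\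
      visible s e (ts k) (VR (ps k).1 (ps k).2) /\
      (forall i : 'I_4, visible s e (ts k) (VA i) /\
         visible s e (ts k) (VB i) /\ visible s e (ts k) (VC i)).
Proof. move=> H; exact: (@main_result R l s e pos H). Qed.
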